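(* Let $S$ be an $E$-demigroup. If the constellation $C^d_E(S)$ is inductive, then $E$ is right pre-reduced and: (I1) for all $t\in S$ and $e\in E$ there is $t\cdot e\in E$ such that for all $s\in S$: ($ste=st$ and $sd(t)=s$) if and only if $s(t\cdot e)=s$; and (I2) $(E,\le_r)$ is a meet-semilattice, and for all $s\in S$ and $e,f\in E$, $se=sf=s$ implies $s(e\wedge f)=s$, where $\wedge$ is the meet in $(E,\le_r)$. That is, $S$ is an inductive $E$-demigroup.
   Context: For a semigroup $S$, $E(S)$ is its set of idempotents; for $e,f\in E(S)$, $e\le_r f$ iff $e=ef$. $E\subseteq E(S)$ is right pre-reduced if $e=ef$ and $f=fe$ imply $e=f$ for $e,f\in E$. A demigroup is a semigroup $S$ with a unary operation $d$ such that for all $x,y\in S$: $d(x)\in E(S)$, $d(x)x=x$ and $d(xy)=d(xd(y))$. For $E\subseteq E(S)$, $S$ is an $E$-demigroup if $d(s)\in E$ for all $s\in S$ and $ed(e)=e$ for all $e\in E$. An $E$-demigroup is inductive if $E$ is right pre-reduced and there is a function $\cdot:S\times E\to E$ satisfying (I1) and (I2). $C_E(S)=\{(e,s)\in E\times S\mid es=s\}$ with partial product $(e,s)\circ(f,t)=(e,st)$ defined exactly when $sf=s$, and $D((e,s))=(e,e)$; $C^d_E(S)=\{(e,s)\in C_E(S)\mid d(e)=d(s)\}$ with the restricted operations. This is a constellation: a set $P$ with partial binary $\circ$ and unary $D$ such that (C1) if $x\circ(y\circ z)$ exists then so does $(x\circ y)\circ z$ and they are equal; (C2) if $x\circ y$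 and $y\circ z$ exist then $x\circ(y\circ z)$ exists; (C3) $D(x)$ is the unique right identity $e$ (i.e. $a\circ e=a$ whenever defined) with $e\circ x=x$. The natural quasiorder on $P$: $s\le t$ iff $D(s)\circ t$ exists and equals $s$; $P$ is normal if this is a partial order. $P$ is inductive if it is normal and (O4) for all $e\in D(P)=\{D(x)\mid x\in P\}$ and $a\in P$ there is a largest $x\in P$ (in the natural order) with $x\le a$ and $x\circ e$ defined, denoted $a|e$; and (O5) for $x,y\in P$, $e\in D(P)$, if $x\circ y$ exists then $D((x\circ y)|e)=D(x|D(y|e))$. *)

(* Defs.v *)
From Stdlib Require Import Classical.

Set Implicit Arguments.

Section Semigroups.
Variable S : Type.
Variable mul : S -> S -> S.
Variable d : S -> S.
Variable E : S -> Prop.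

Local Infix "*" := mul.

Definition is_semigroup : Prop := forall x y z, x * (y * z) = (x * y) * z.

Definition idempotent (e : S) : Prop := e * e = e.

Definition le_r (e f : S) : Prop := e = e * f.

Definition right_pre_reduced : Prop :=
  forall e f, E e -> E f -> e = e * f -> f = f * e -> e = f.

Definition is_demigroup : Prop :=
  is_semigroup /\
  forall x y, idempotent (d x) /\ d x * x = x /\ d (x * y) = d (x * d y).

Definition is_E_demigroup : Prop :=
  is_demigroup /\
  (forall e, E e -> idempotent e) /\
  (forall s, E (d s)) /\
  (forall e, E e -> e * d e = e).

Definition I1 (dot : S -> S -> S) : Prop :=
  forall t e, E e ->
    E (dot t e) /\
    forall s, ((s * t * e = s * t /\ s * d t = s) <-> s * dot t e = s).

Definition partial_order_on (le : S -> S -> Prop) : Prop :=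
  (forall e, E e -> le e e) /\
  (forall e f g, E e -> E f -> E g -> le e f -> le f g -> le e g) /\
  (forall e f, E e -> E f -> le e f -> le f e -> e = f).

Definition is_meet (le : S -> S -> Prop) (e f m : S) : Prop :=
  E m /\ le m e /\ le m f /\
  forall x, E x -> le x e -> le x f -> le x m.

Definition meet_semilattice (le : S -> S -> Prop) : Prop :=
  partial_order_on le /\
  forall e f, E e -> E f -> exists m, is_meet le e f m.

Definition I2 : Prop :=
  meet_semilattice le_r /\
  forall s e f m, E e -> E f -> is_meet le_r e f m ->
    s * e = s -> s * f = s -> s * m = s.

Definition inductive_E_demigroup : Prop :=
  is_E_demigroup /\ right_pre_reduced /\
  exists dot : S -> S -> S, I1 dot /\ I2.

Definition CdE (p : S * S) : Prop :=
  E (fst p) /\ fst p * snd p = snd p /\ d (fst p) = d (snd p).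

(* Partial product as a relation: CdE_comp x y z  iff  x o y is defined and equals z.
   (e,s) o (f,t) = (e, s t), defined exactly when s f = s. *)
Definition CdE_comp (x y z : S * S) : Prop :=
  snd x * fst y = snd x /\ z = (fst x, snd x * snd y).

Definition CdE_D (x : S * S) : S * S := (fst x, fst x).

End Semigroups.

(* Generic notions for a constellation (P, o, D): P is given as a carrier predicate
   inP on a type A, the partial product as a relation comp x y z :<-> "x o y exists
   and equals z", and D as a function. All quantifiers range over P. *)
Section Constellations.
Variable A : Type.
Variable inP : A -> Prop.
Variable comp : A -> A -> A -> Prop.
Variable D : A -> A.

Definition defined (x y : A) : Prop := exists z, inP z /\ comp x y z.

Definition nat_le (s t : A) : Prop := comp (D s) t s.

Definition normal : Prop :=
  (forall x, inP x -> nat_le x x) /\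
  (forall x y z, inP x -> inP y -> inP z -> nat_le x y -> nat_le y z -> nat_le x z) /\
  (forall x y, inP x -> inP y -> nat_le x y -> nat_le y x -> x = y).

Definition in_DP (e : A) : Prop := exists x, inP x /\ e = D x.

Definition is_restr (a e x : A) : Prop :=
  inP x /\ nat_le x a /\ defined x e /\
  forall y, inP y -> nat_le y a -> defined y e -> nat_le y x.

Definition O4 : Prop :=
  forall e a, in_DP e -> inP a -> exists x, is_restr a e x.

Definition O5 : Prop :=
  forall x y xy e, inP x -> inP y -> inP xy -> comp x y xy -> in_DP e ->
    forall r w u, is_restr xy e r -> is_restr y e w -> is_restr x (D w) u ->
      D r = D u.

Definition inductive_constellation : Prop := normal /\ O4 /\ O5.

End Constellations.

(* Main.v *)
Require Import Defs.
From Stdlib Require Import Classical ClassicalEpsilon.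

Theorem proposition3p5 (S : Type) (mul : S -> S -> S) (d : S -> S) (E : S -> Prop) :
  is_E_demigroup mul d E ->
  inductive_constellation (CdE mul d E) (CdE_comp mul) (@CdE_D S) ->
  right_pre_reduced mul E /\
  (exists dot : S -> S -> S, I1 mul d E dot /\ I2 mul E) /\
  inductive_E_demigroup mul d E.
Proof.
  intros HED HIC.
  pose proof HED as HED0.
  destruct HED as [[Hass Hdem] [HEid [HdE HEd]]].
  destruct HIC as [[Hrefl [Htrans Hanti]] [HO4 HO5]].
  unfold is_semigroup in Hass.
  assert (Hdd : forall t, d (d t) = d t).
  { intro t. destruct (Hdem t t) as [Hi [_ _]].
    destruct (Hdem (d t) t) as [_ [_ H3]].
    destruct (Hdem t t) as [_ [H2 _]].
    rewrite H2 in H3. unfold idempotent in Hi. rewrite Hi in H3. congruence. }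
  assert (HeeP : forall e, E e -> CdE mul d E (e, e)).
  { intros e He. unfold CdE; simpl. repeat split; auto. apply HEid; auto. }
  assert (HdtP : forall t, CdE mul d E (d t, t)).
  { intro t. unfold CdE; simpl. repeat split; auto. apply (Hdem t t). }
  assert (HDP : forall e, E e -> in_DP (CdE mul d E) (@CdE_D S) (e, e)).
  { intros e He. exists (e, e). split; auto. }
  assert (Hrpr : right_pre_reduced mul E).
  { intros e f He Hf H1 H2.
    assert (Hq : (e, e) = (f, f)).
    { apply Hanti; auto.
      - unfold nat_le, CdE_comp, CdE_D; simpl. split; [congruence|]. rewrite <- H1. reflexivity.
      - unfold nat_le, CdE_comp, CdE_D; simpl. split; [congruence|]. rewrite <- H2. reflexivity. }
    congruence. }
  assert (Key : forall s p q c w, CdE mul d E (p, q) -> mul s p = s -> E c ->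
             mul (mul s q) c = mul s q ->
             is_restr (CdE mul d E) (CdE_comp mul) (@CdE_D S) (p, q) (c, c) w ->
             mul s (fst w) = s).
  { intros s p q c w HyP Hsp Hc Hsqc Hw.
    destruct HyP as [HpE [Hpq Hdpq]]. simpl in *.
    set (x := (d s, s)). set (xy := (d s, mul s q)).
    assert (HxP : CdE mul d E x).
    { unfold x, CdE; simpl. repeat split; auto. apply (Hdem s s). }
    assert (Hdsq : d (mul s q) = d s).
    { destruct (Hdem s q) as [_ [_ H1]]. destruct (Hdem s p) as [_ [_ H2]].
      rewrite H1, <- Hdpq, <- H2, Hsp. reflexivity. }
    assert (HxyP : CdE mul d E xy).
    { unfold xy, CdE; simpl. repeat split; auto.
      - rewrite Hass. destruct (Hdem s s) as [_ [H _]]. rewrite H; auto.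
      - rewrite Hdd, Hdsq. reflexivity. }
    assert (Hcomp : CdE_comp mul x (p, q) xy).
    { unfold CdE_comp, x, xy; simpl. auto. }
    destruct (HO4 (c, c) xy (HDP c Hc) HxyP) as [r Hr].
    assert (HwP : CdE mul d E w) by (apply Hw).
    assert (HDw : in_DP (CdE mul d E) (@CdE_D S) (CdE_D w)).
    { exists w. auto. }
    destruct (HO4 (CdE_D w) x HDw HxP) as [u Hu].
    assert (HDr := HO5 x (p, q) xy (c, c) HxP (conj HpE (conj Hpq Hdpq)) HxyP Hcomp
                     (HDP c Hc) r w u Hr Hw Hu).
    unfold CdE_D in HDr. injection HDr as Hru.
    assert (Hxyr : nat_le (CdE_comp mul) (@CdE_D S) xy r).
    { destruct Hr as [_ [_ [_ Hrmax]]]. apply Hrmax.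
      - exact HxyP.
      - apply Hrefl. exact HxyP.
      - exists xy. split; [exact HxyP|]. unfold CdE_comp, xy; simpl. split; [exact Hsqc|].
        rewrite Hsqc. reflexivity. }
    destruct Hxyr as [Hxyr1 _]. unfold xy, CdE_D in Hxyr1; simpl in Hxyr1.
    destruct Hu as [_ [[Hu1 Hu2] [[z [_ [Hz1 _]]] _]]].
    unfold CdE_D, x in Hu1, Hu2; simpl in Hu1, Hu2.
    unfold CdE_D in Hz1; simpl in Hz1.
    rewrite Hu2 in Hz1. simpl in Hz1.
    destruct (Hdem s s) as [_ [Hds _]].
    rewrite Hru in Hxyr1.
    transitivity (mul (d s) (mul s (fst w))); [rewrite Hass, Hds; reflexivity|].
    rewrite <- Hxyr1 at 1. rewrite <- Hass. rewrite (Hass (fst u) s (fst w)), Hz1.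
    rewrite Hass, Hxyr1, Hds. reflexivity. }
  assert (Hex1 : forall t e, exists g, E e -> E g /\
             forall s, ((mul (mul s t) e = mul s t /\ mul s (d t) = s) <-> mul s g = s)).
  { intros t e. destruct (classic (E e)) as [He|He]; [|exists t; tauto].
    destruct (HO4 (e, e) (d t, t) (HDP e He) (HdtP t)) as [w Hw].
    exists (fst w). intros _.
    assert (HwP : CdE mul d E w) by apply Hw.
    pose proof Hw as Hw'. destruct Hw' as [_ [[Hw1 Hw2] [[z [_ [Hz1 _]]] _]]].
    unfold CdE_D in Hw1, Hw2; simpl in Hw1, Hw2. simpl in Hz1.
    split; [apply HwP|]. intro s. split.
    - intros [H1 H2]. apply (Key s (d t) t e w (HdtP t) H2 He H1). exact Hw.
    - intro Hs. rewrite Hw2 in Hz1; simpl in Hz1. split.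
      + rewrite <- Hs. rewrite <- !Hass. rewrite (Hass (fst w) t e). rewrite Hz1. reflexivity.
      + rewrite <- Hs at 1. rewrite <- Hass, Hw1, Hs. reflexivity. }
  set (dot := fun t e => proj1_sig (constructive_indefinite_description _ (Hex1 t e))).
  assert (HI1 : I1 mul d E dot).
  { intros t e He. unfold dot.
    destruct (constructive_indefinite_description _ (Hex1 t e)) as [g Hg]. simpl. auto. }
  assert (Hmeet : forall e f, E e -> E f -> exists w,
             is_restr (CdE mul d E) (CdE_comp mul) (@CdE_D S) (e, e) (f, f) w /\
             is_meet E (le_r mul) e f (fst w)).
  { intros e f He Hf.
    destruct (HO4 (f, f) (e, e) (HDP f Hf) (HeeP e He)) as [w Hw].
    exists w. split; auto.
    pose proof Hw as Hw'. destruct Hw' as [HwP [[Hw1 Hw2] [[z [_ [Hz1 _]]] Hmax]]].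
    unfold CdE_D in Hw1, Hw2; simpl in Hw1, Hw2. simpl in Hz1.
    assert (Hsw : snd w = fst w) by (rewrite Hw2; simpl; congruence).
    rewrite Hsw in Hz1.
    unfold is_meet, le_r. split; [apply HwP|]. split; [congruence|]. split; [congruence|].
    intros x Hx Hxe Hxf.
    assert (Hl : nat_le (CdE_comp mul) (@CdE_D S) (x, x) w).
    { apply Hmax.
      - apply HeeP; auto.
      - unfold nat_le, CdE_comp, CdE_D; simpl. split; [congruence|]. rewrite <- Hxe. reflexivity.
      - exists (x, x). split; [apply HeeP; auto|]. unfold CdE_comp; simpl. split; [congruence|].
        rewrite <- Hxf. reflexivity. }
    destruct Hl as [Hl _]. simpl in Hl. congruence. }
  assert (HI2 : I2 mul E).
  { split.
    - split.
      + unfold partial_order_on, le_r. split; [|split].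
        * intros e He. symmetry. apply HEid; auto.
        * intros e f g He Hf Hg H1 H2. rewrite H1 at 2. rewrite <- Hass, <- H2. exact H1.
        * intros e f He Hf H1 H2. apply Hrpr; auto.
      + intros e f He Hf. destruct (Hmeet e f He Hf) as [w [_ Hm]]. eauto.
    - intros s e f m He Hf Hm Hse Hsf.
      destruct (Hmeet e f He Hf) as [w [Hw Hwm]].
      assert (Hsw : mul s (fst w) = s).
      { apply (Key s e e f w (HeeP e He) Hse Hf); auto. rewrite Hse. exact Hsf. }
      destruct Hwm as [HwE [Hwe [Hwf _]]].
      destruct Hm as [_ [_ [_ Hmm]]].
      assert (Hwl : le_r mul (fst w) m) by (apply Hmm; auto).
      unfold le_r in Hwl. rewrite <- Hsw at 2. rewrite Hwl, Hass, Hsw. reflexivity. }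
  split; [exact Hrpr|]. split; [exists dot; auto|].
  split; [exact HED0|]. split; [exact Hrpr|]. exists dot; auto.
Qed.
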